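(* Let $K>0$, $r=1/K$, and let $p:[0,L]\to\mathbb{R}^d$ be the arc length parametrisation of an open equilateral polygon of length $L$ with vertices $p(a_0),\dots,p(a_n)$, $0=a_0<\dots<a_n=L$, such that $\mathrm{maxCurv}_2(p)\le K$ and $KL\le\pi/2$. Suppose $p$ touches the sphere $\partial B_r(c)$ tangentially at its endpoint $p(0)$, i.e. $|p(0)-c|=r$ and the direction of the first edge $p(a_1)-p(a_0)$ is orthogonal to $p(0)-c$. Then $|p(a_k)-c|>r$ for all $k=1,\dots,n$.
   Context: For an open polygon $p$ with vertices $y_k=p(a_k)$, the discrete curvature at an interior vertex $y_k$ ($1\le k\le n-1$) is $\kappa_{d,2}(y_{k-1},y_k,y_{k+1})=\frac{\phi_k}{(|y_{k-1}-y_k|+|y_{k+1}-y_k|)/2}$, where $\phi_k=\measuredangle(y_k-y_{k-1},y_{k+1}-y_k)\in[0,\pi]$ is the exterior angle at $y_k$; $\mathrm{maxCurv}_2(p)$ is the maximum of $\kappa_{d,2}$ over all interior vertices. *)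

(* Defs.v *)
From Stdlib Require Import Reals Lra.
Open Scope R_scope.

(* Points of R^d are represented as functions nat -> R, of which only the
   coordinates 0..d-1 are relevant. *)
Definition vec := nat -> R.

Definition vsub (x y : vec) : vec := fun i => x i - y i.

Fixpoint dot (d : nat) (x y : vec) : R :=
  match d with
  | O => 0
  | S d' => dot d' x y + x d' * y d'
  end.

Definition vnorm (d : nat) (x : vec) : R := sqrt (dot d x x).

Definition vangle (d : nat) (u v : vec) : R :=
  acos (dot d u v / (vnorm d u * vnorm d v)).

Definition kappa_d2 (d : nat) (ym y yp : vec) : R :=
  vangle d (vsub y ym) (vsub yp y)
  / ((vnorm d (vsub ym y) + vnorm d (vsub yp y)) / 2).

Definition maxCurv2_le (d n : nat) (y : nat -> vec) (K : R) : Prop :=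
  forall k : nat, (1 <= k <= n - 1)%nat ->
    kappa_d2 d (y (k - 1)%nat) (y k) (y (k + 1)%nat) <= K.

(* Main.v *)
Require Import Defs.
From Stdlib Require Import Reals Lra Lia Psatz.
Open Scope R_scope.

Lemma dot_ext d x x' z z' : (forall i, x i = x' i) -> (forall i, z i = z' i) ->
  dot d x z = dot d x' z'.
Proof. intros H1 H2; induction d; simpl; [reflexivity| rewrite IHd, H1, H2; reflexivity]. Qed.

Lemma dot_sym d x z : dot d x z = dot d z x.
Proof. induction d; simpl; [reflexivity| rewrite IHd; ring]. Qed.

Lemma dot_nonneg d x : 0 <= dot d x x.
Proof. induction d; simpl; [lra| nra]. Qed.

Lemma dot_comb3 d x y z p q s p' q' s' :
  dot d (fun i => p * x i + q * y i + s * z i) (fun i => p' * x i + q' * y i + s' * z i)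
  = p*p'*dot d x x + p*q'*dot d x y + p*s'*dot d x z
  + q*p'*dot d y x + q*q'*dot d y y + q*s'*dot d y z
  + s*p'*dot d z x + s*q'*dot d z y + s*s'*dot d z z.
Proof. induction d; simpl; [ring| rewrite IHd; ring]. Qed.

Lemma dot_addl d x y z : dot d (fun i => x i + y i) z = dot d x z + dot d y z.
Proof. induction d; simpl; [ring| rewrite IHd; ring]. Qed.

Lemma dot_add_sq d x y : dot d (fun i => x i + y i) (fun i => x i + y i)
  = dot d x x + 2 * dot d x y + dot d y y.
Proof. induction d; simpl; [ring| rewrite IHd; ring]. Qed.

Lemma dot_2 d x y p q : dot d (fun i => p * x i + q * y i) (fun i => p * x i + q * y i)
  = p*p*dot d x x + 2*p*q*dot d x y + q*q*dot d y y.
Proof. induction d; simpl; [ring| rewrite IHd; ring]. Qed.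

Lemma cauchy_schwarz d x y : (dot d x y)^2 <= dot d x x * dot d y y.
Proof.
  pose proof (dot_nonneg d x) as Hx. pose proof (dot_nonneg d y) as Hy.
  destruct (Req_dec (dot d y y) 0) as [Hy0|Hy0].
  - destruct (Req_dec (dot d x x) 0) as [Hx0|Hx0].
    + pose proof (dot_nonneg d (fun i => 1 * x i + (- dot d x y) * y i)) as H.
      rewrite dot_2, Hx0, Hy0 in H. rewrite Hx0, Hy0. nra.
    + pose proof (dot_nonneg d (fun i => (- dot d x y) * x i + (dot d x x) * y i)) as H.
      rewrite dot_2, Hy0 in H. rewrite Hy0. nra.
  - pose proof (dot_nonneg d (fun i => (dot d y y) * x i + (- dot d x y) * y i)) as H.
    rewrite dot_2 in H.
    assert (0 < dot d y y) by lra.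
    assert (0 <= dot d y y * (dot d x x * dot d y y - (dot d x y)^2)) by nra.
    nra.
Qed.

Lemma vnorm_sq d x : vnorm d x ^ 2 = dot d x x.
Proof. unfold vnorm. simpl. rewrite Rmult_1_r. apply sqrt_sqrt, dot_nonneg. Qed.

Lemma vnorm_nonneg d x : 0 <= vnorm d x.
Proof. apply sqrt_pos. Qed.

Lemma dot_vsub_swap d a b : dot d (vsub a b) (vsub a b) = dot d (vsub b a) (vsub b a).
Proof. induction d; simpl; [ring| rewrite IHd; unfold vsub; ring]. Qed.

Lemma vnorm_vsub_swap d a b : vnorm d (vsub a b) = vnorm d (vsub b a).
Proof. unfold vnorm; rewrite dot_vsub_swap; reflexivity. Qed.

Lemma cs_lower d x y : - (sqrt (dot d x x) * sqrt (dot d y y)) <= dot d x y.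
Proof.
  pose proof (cauchy_schwarz d x y).
  rewrite <- sqrt_mult by apply dot_nonneg.
  assert (Rabs (dot d x y) <= sqrt (dot d x x * dot d y y)).
  { rewrite <- sqrt_Rsqr_abs. apply sqrt_le_1_alt. unfold Rsqr. lra. }
  pose proof (Rle_abs (- dot d x y)). rewrite Rabs_Ropp in *. lra.
Qed.

Lemma bessel2 d x a b : dot d a b = 0 -> 0 < dot d a a -> 0 < dot d b b ->
  (dot d x a)^2 * dot d b b + (dot d x b)^2 * dot d a a <= dot d x x * dot d a a * dot d b b.
Proof.
  intros Hab Ha Hb.
  pose proof (dot_nonneg d (fun i => (dot d a a * dot d b b) * x i + (- (dot d x a * dot d b b)) * a i
     + (- (dot d x b * dot d a a)) * b i)) as H.
  rewrite dot_comb3 in H.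
  rewrite (dot_sym d a x), (dot_sym d b x), (dot_sym d b a), Hab in H.
  assert (0 <= dot d a a * dot d b b * (dot d x x * dot d a a * dot d b b
           - ((dot d x a)^2 * dot d b b + (dot d x b)^2 * dot d a a))) by nra.
  assert (0 < dot d a a * dot d b b) by nra.
  nra.
Qed.

(* angle triangle inequality, in inner-product form *)
Lemma angle_tri d a b c : 0 < dot d b b ->
  dot d a b * dot d b c - sqrt (dot d b b * dot d a a - (dot d a b)^2)
     * sqrt (dot d b b * dot d c c - (dot d b c)^2) <= dot d b b * dot d a c.
Proof.
  intros Hb.
  set (B := dot d b b) in *.
  pose proof (cs_lower d (fun i => B * a i + (- dot d a b) * b i + 0 * c i)
                         (fun i => 0 * a i + (- dot d c b) * b i + B * c i)) as H.
  rewrite !dot_comb3 in H.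
  rewrite (dot_sym d b a), (dot_sym d c a), (dot_sym d c b) in H.
  fold B in H.
  replace (B * B * dot d a a + B * - dot d a b * dot d a b + B * 0 * dot d a c +
        - dot d a b * B * dot d a b + - dot d a b * - dot d a b * B + - dot d a b * 0 * dot d b c +
        0 * B * dot d a c + 0 * - dot d a b * dot d b c + 0 * 0 * dot d c c)
    with (B * (B * dot d a a - (dot d a b)^2)) in H by ring.
  replace (0 * 0 * dot d a a + 0 * - dot d b c * dot d a b + 0 * B * dot d a c +
        - dot d b c * 0 * dot d a b + - dot d b c * - dot d b c * B + - dot d b c * B * dot d b c +
        B * 0 * dot d a c + B * - dot d b c * dot d b c + B * B * dot d c c)
    with (B * (B * dot d c c - (dot d b c)^2)) in H by ring.
  pose proof (cauchy_schwarz d a b). pose proof (cauchy_schwarz d b c).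
  fold B in H0, H1.
  assert (0 <= B * dot d a a - dot d a b ^ 2) by nra.
  assert (0 <= B * dot d c c - dot d b c ^ 2) by nra.
  rewrite (sqrt_mult B (B * dot d a a - dot d a b ^ 2)) in H by lra.
  rewrite (sqrt_mult B (B * dot d c c - dot d b c ^ 2)) in H by lra.
  assert (Hs: sqrt B * sqrt B = B) by (apply sqrt_sqrt; lra).
  set (S1 := sqrt (B * dot d a a - dot d a b ^ 2)) in *.
  set (S2 := sqrt (B * dot d c c - dot d b c ^ 2)) in *.
  assert (B * (dot d a b * dot d b c - S1 * S2) <= B * (B * dot d a c)).
  { replace (sqrt B * S1 * (sqrt B * S2)) with ((sqrt B * sqrt B) * (S1*S2)) in H by ring.
    rewrite Hs in H. lra. }
  apply Rmult_le_reg_l with B; lra.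
Qed.

Fixpoint asum (h be : R) (m : nat) : R :=
  match m with O => 0 | S m' => asum h be m' + h * cos (INR m' * be) end.
Fixpoint bsum (h be : R) (m : nat) : R :=
  match m with O => 0 | S m' => bsum h be m' + h * sin (INR m' * be) end.

Lemma asum_closed h x m :
  sin x * asum h (2*x) m = h * sin (INR m * x) * cos ((INR m - 1) * x).
Proof.
  induction m as [|m IH].
  - simpl. rewrite Rmult_0_l, sin_0. ring.
  - cbn [asum]. rewrite S_INR.
    replace ((INR m + 1 - 1) * x) with (INR m * x) by ring.
    replace ((INR m + 1) * x) with (INR m * x + x) by ring.
    replace (INR m * (2 * x)) with (2 * (INR m * x)) by ring.
    rewrite Rmult_plus_distr_l, IH.
    replace ((INR m - 1) * x) with (INR m * x - x) by ring.
    rewrite sin_plus, cos_minus, cos_2a. ring.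
Qed.

Lemma bsum_closed h x m :
  sin x * bsum h (2*x) m = h * sin (INR m * x) * sin ((INR m - 1) * x).
Proof.
  induction m as [|m IH].
  - simpl. rewrite Rmult_0_l, sin_0. ring.
  - cbn [bsum]. rewrite S_INR.
    replace ((INR m + 1 - 1) * x) with (INR m * x) by ring.
    replace ((INR m + 1) * x) with (INR m * x + x) by ring.
    replace (INR m * (2 * x)) with (2 * (INR m * x)) by ring.
    rewrite Rmult_plus_distr_l, IH.
    replace ((INR m - 1) * x) with (INR m * x - x) by ring.
    rewrite sin_plus, sin_minus, sin_2a. ring.
Qed.

Lemma INR_fact_eq n z : Z.of_nat (Factorial.fact n) = z -> INR (Factorial.fact n) = IZR z.
Proof. intros <-. apply INR_IZR_INZ. Qed.

Lemma xcos_le_sin x : 0 <= x <= 1 -> x * cos x <= sin x.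
Proof.
  intros Hx.
  assert (PI > 3) by (pose proof PI2_3_2; lra).
  destruct (SIN x) as [H1 _]; try lra.
  destruct (COS x) as [_ H2]; try lra.
  unfold sin_lb, cos_ub, sin_approx, cos_approx in *.
  cbn [sum_f_R0] in *. unfold sin_term, cos_term in *. cbn [Nat.mul Nat.add pow] in *.
  rewrite (INR_fact_eq 1 1 ltac:(vm_compute; reflexivity)) in H1.
  rewrite (INR_fact_eq 3 6 ltac:(vm_compute; reflexivity)) in H1.
  rewrite (INR_fact_eq 5 120 ltac:(vm_compute; reflexivity)) in H1.
  rewrite (INR_fact_eq 7 5040 ltac:(vm_compute; reflexivity)) in H1.
  rewrite (INR_fact_eq 0 1 ltac:(vm_compute; reflexivity)) in H2.
  rewrite (INR_fact_eq 2 2 ltac:(vm_compute; reflexivity)) in H2.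
  rewrite (INR_fact_eq 4 24 ltac:(vm_compute; reflexivity)) in H2.
  rewrite (INR_fact_eq 6 720 ltac:(vm_compute; reflexivity)) in H2.
  rewrite (INR_fact_eq 8 40320 ltac:(vm_compute; reflexivity)) in H2.
  assert (x * cos x <= x * (1 - x^2/2 + x^4/24 - x^6/720 + x^8/40320)).
  { apply Rmult_le_compat_l; [lra|]. simpl pow. lra. }
  assert (0 <= x^3 * (1/3 - x^2/30 + x^4*(1/840) - x^6 / 40320)).
  { apply Rmult_le_pos. apply pow_le; lra.
    assert (x^2 <= 1) by (rewrite <- (pow1 2); apply pow_incr; lra).
    assert (0 <= x^4) by (apply pow_le; lra).
    assert (x^6 <= 1) by (rewrite <- (pow1 6); apply pow_incr; lra).
    lra. }
  simpl pow in *.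
  lra.
Qed.

Lemma trig_final r x m : 0 < r -> 0 < x -> (1 <= m)%nat -> INR m * x <= PI / 4 ->
  0 <= asum (2*r*x) (2*x) m /\ bsum (2*r*x) (2*x) m <= r /\
  2 * r * bsum (2*r*x) (2*x) m < (asum (2*r*x) (2*x) m)^2 + (bsum (2*r*x) (2*x) m)^2.
Proof.
  intros Hr Hx Hm HA.
  pose proof (asum_closed (2*r*x) x m) as Ea.
  pose proof (bsum_closed (2*r*x) x m) as Eb.
  set (a := asum (2*r*x) (2*x) m) in *.
  set (b := bsum (2*r*x) (2*x) m) in *.
  assert (HPI: PI > 3) by (pose proof PI2_3_2; lra).
  pose proof PI_4 as HP4.
  assert (Hm1: 1 <= INR m) by (apply (le_INR 1); exact Hm).
  set (A := INR m * x) in *.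
  assert (EB: (INR m - 1) * x = A - x) by (unfold A; ring).
  rewrite EB in Ea, Eb.
  assert (HxA: x <= A) by (unfold A; nra).
  assert (Hx1: x <= 1) by lra.
  assert (Hs: 0 < sin x) by (apply sin_gt_0; lra).
  assert (Hsx: sin x < x) by (apply sin_lt_x; lra).
  assert (Hxc: x * cos x <= sin x) by (apply xcos_le_sin; lra).
  assert (Hc: 0 < cos x) by (apply cos_gt_0; lra).
  assert (HSA: 0 < sin A) by (apply sin_gt_0; lra).
  assert (HCA: 0 <= cos A) by (apply cos_ge_0; lra).
  assert (HSB: 0 <= sin (A - x)) by (apply sin_ge_0; lra).
  assert (HCB: 0 <= cos (A - x)) by (apply cos_ge_0; lra).
  assert (HSBA: sin (A - x) < sin A) by (apply sin_increasing_1; lra).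
  assert (HSA2: sin A ^ 2 <= 1/2).
  { assert (sin A <= sin (PI/4)) by (apply sin_incr_1; lra).
    rewrite sin_PI4 in H.
    assert (sqrt 2 * sqrt 2 = 2) by (apply sqrt_sqrt; lra).
    assert (0 < sqrt 2) by (apply sqrt_lt_R0; lra).
    assert (sin A * sqrt 2 <= 1).
    { apply Rmult_le_reg_r with (/ sqrt 2). apply Rinv_0_lt_compat; lra.
      rewrite Rmult_assoc, Rinv_r by lra. lra. }
    nra. }
  split; [|split].
  -
    assert (0 <= sin x * a) by (rewrite Ea; repeat apply Rmult_le_pos; lra).
    nra.
  -
    assert (E2: sin (A - x) = sin A * cos x - cos A * sin x) by apply sin_minus.
    assert (sin x * b <= sin x * r).
    { rewrite Eb, E2.
      assert (0 <= 2 * r * x * sin A * cos A * sin x) by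
        (repeat apply Rmult_le_pos; lra).
      assert (2 * r * (x * cos x) * sin A ^ 2 <= 2 * r * sin x * sin A ^ 2).
      { assert (0 <= 2*r*sin A^2) by (apply Rmult_le_pos; nra).
        assert (0 <= (sin x - x * cos x) * (2*r*sin A^2)) by (apply Rmult_le_pos; lra).
        lra. }
      assert (r * sin x * (2 * sin A^2) <= r * sin x * 1).
      { apply Rmult_le_compat_l; [apply Rmult_le_pos|]; lra. }
      lra. }
    nra.
  - assert (E1: sin (A - x) ^ 2 + cos (A - x) ^ 2 = 1).
    { pose proof (sin2_cos2 (A - x)). unfold Rsqr in H. simpl. lra. }
    assert (Key: sin x * sin (A - x) < x * sin A) by nra.
    assert (sin x ^ 2 * (2 * r * b) < sin x ^ 2 * (a^2 + b^2)).
    { replace (sin x ^ 2 * (2 * r * b)) with (2 * r * sin x * (sin x * b)) by ring.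
      replace (sin x ^ 2 * (a^2 + b^2)) with ((sin x * a)^2 + (sin x * b)^2) by ring.
      rewrite Ea, Eb.
      replace ((2 * r * x * sin A * cos (A - x)) ^ 2 + (2 * r * x * sin A * sin (A - x)) ^ 2)
        with ((2 * r * x * sin A)^2 * (sin (A - x) ^ 2 + cos (A - x) ^ 2)) by ring.
      rewrite E1.
      replace (2 * r * sin x * (2 * r * x * sin A * sin (A - x)))
        with ((2*r)^2 * x * sin A * (sin x * sin (A - x))) by ring.
      assert (0 < (2*r)^2 * x * sin A) by (repeat apply Rmult_lt_0_compat; nra).
      replace ((2 * r * x * sin A) ^ 2 * 1) with ((2*r)^2 * x * sin A * (x * sin A)) by ring.
      apply Rmult_lt_compat_l; lra. }
    assert (0 < sin x ^ 2) by nra.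
    apply Rmult_lt_reg_l with (sin x ^ 2); lra.
Qed.

Lemma acos_le_cos z t : -1 <= z <= 1 -> acos z <= t -> t <= PI -> cos t <= z.
Proof.
  intros Hz H1 H2. pose proof (acos_bound z).
  rewrite <- (cos_acos z Hz). apply cos_decr_1; lra.
Qed.

Lemma dot_zero d x z : (forall i, x i = 0) -> dot d x z = 0.
Proof. intros H; induction d; simpl; [reflexivity| rewrite IHd, H; ring]. Qed.

Theorem corollary7 (d n : nat) (y : nat -> vec) (L K : R) (c : vec) :
  0 < K ->
  (1 <= n)%nat ->
  0 < L ->
  (forall k : nat, (1 <= k <= n)%nat ->
     vnorm d (vsub (y k) (y (k - 1)%nat)) = L / INR n) ->
  maxCurv2_le d n y K ->
  K * L <= PI / 2 ->
  vnorm d (vsub (y 0%nat) c) = 1 / K ->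
  dot d (vsub (y 1%nat) (y 0%nat)) (vsub (y 0%nat) c) = 0 ->
  forall k : nat, (1 <= k <= n)%nat -> vnorm d (vsub (y k) c) > 1 / K.
Proof.
  intros HK Hn HL Hedge Hcurv HKL Hc0 Horth k Hk.
  assert (HnR: 1 <= INR n) by (apply (le_INR 1); exact Hn).
  set (h := L / INR n) in *.
  assert (Hh: 0 < h) by (unfold h; apply Rdiv_lt_0_compat; lra).
  set (r := 1 / K) in *.
  assert (Hr: 0 < r) by (unfold r; apply Rdiv_lt_0_compat; lra).
  assert (HrK: r * K = 1) by (unfold r; field; lra).
  set (beta := K * h).
  assert (Hbeta: 0 < beta) by (unfold beta; nra).
  assert (HnB: INR n * beta = K * L) by (unfold beta, h; field; lra).
  assert (HPI: PI > 3) by (pose proof PI2_3_2; lra).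
  set (w := vsub (y 0%nat) c) in *.
  assert (Hw: dot d w w = r^2) by (rewrite <- vnorm_sq, Hc0; reflexivity).
  assert (He: forall m, (m < n)%nat -> dot d (vsub (y (S m)) (y m)) (vsub (y (S m)) (y m)) = h^2).
  { intros m Hm. pose proof (Hedge (S m) ltac:(lia)) as H.
    replace (S m - 1)%nat with m in H by lia.
    rewrite <- vnorm_sq, H. reflexivity. }
  assert (Hcosb: forall m, (S m < n)%nat ->
     h^2 * cos beta <= dot d (vsub (y (S m)) (y m)) (vsub (y (S (S m))) (y (S m)))).
  { intros m Hm. pose proof (Hcurv (S m) ltac:(lia)) as H.
    unfold kappa_d2 in H.
    replace (S m - 1)%nat with m in H by lia.
    replace (S m + 1)%nat with (S (S m)) in H by lia.
    rewrite vnorm_vsub_swap in H.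
    assert (N1: vnorm d (vsub (y (S m)) (y m)) = h).
    { pose proof (Hedge (S m) ltac:(lia)) as H1. replace (S m - 1)%nat with m in H1 by lia. exact H1. }
    assert (N2: vnorm d (vsub (y (S (S m))) (y (S m))) = h).
    { pose proof (Hedge (S (S m)) ltac:(lia)) as H1. replace (S (S m) - 1)%nat with (S m) in H1 by lia. exact H1. }
    rewrite N1, N2 in H.
    replace ((h + h) / 2) with h in H by field.
    unfold vangle in H. rewrite N1, N2 in H.
    set (q := dot d (vsub (y (S m)) (y m)) (vsub (y (S (S m))) (y (S m)))) in *.
    set (t := acos (q / (h * h))) in *.
    assert (Ht: t <= beta).
    { unfold beta. replace t with ((t / h) * h) by (field; lra).
      apply Rmult_le_compat_r; lra. }
    pose proof (cauchy_schwarz d (vsub (y (S m)) (y m)) (vsub (y (S (S m))) (y (S m)))) as CS.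
    fold q in CS. rewrite (He m ltac:(lia)), (He (S m) ltac:(lia)) in CS.
    assert (Hz: -1 <= q / (h * h) <= 1).
    { assert (0 < h * h) by nra.
      split.
      - apply Rmult_le_reg_r with (h*h); [lra|]. unfold Rdiv. rewrite Rmult_assoc, Rinv_l by lra. nra.
      - apply Rmult_le_reg_r with (h*h); [lra|]. unfold Rdiv. rewrite Rmult_assoc, Rinv_l by lra. nra. }
    assert (Hbp: beta <= PI) by nra.
    pose proof (acos_le_cos (q / (h*h)) beta Hz Ht Hbp) as Hc.
    assert (0 < h * h) by nra.
    apply Rmult_le_compat_l with (r := h*h) in Hc; [|lra].
    replace (h * h * (q / (h * h))) with q in Hc by (field; lra).
    simpl. lra. }
  assert (Hsq: forall u v, 0 <= v -> u <= v^2 -> sqrt u <= v).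
  { intros u v Hv Hu. rewrite <- (sqrt_pow2 v Hv). apply sqrt_le_1_alt. exact Hu. }
  assert (C1: forall m, (m < n)%nat ->
     h^2 * cos (INR m * beta) <= dot d (vsub (y 1%nat) (y 0%nat)) (vsub (y (S m)) (y m))).
  { induction m as [|m IH]; intros Hm.
    - simpl. rewrite Rmult_0_l, cos_0, (He 0%nat Hm). lra.
    - specialize (IH ltac:(lia)).
      set (X := INR m * beta) in *.
      assert (HX0: 0 <= X) by (unfold X; apply Rmult_le_pos; [apply pos_INR|lra]).
      assert (HXb: X + beta <= PI / 2).
      { assert (INR (S m) <= INR n) by (apply le_INR; lia).
        rewrite S_INR in H. unfold X. nra. }
      pose proof (angle_tri d (vsub (y 1%nat) (y 0%nat)) (vsub (y (S m)) (y m))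
                   (vsub (y (S (S m))) (y (S m)))) as AT.
      rewrite (He m ltac:(lia)), (He 0%nat ltac:(lia)), (He (S m) Hm) in AT.
      specialize (AT ltac:(nra)).
      set (P := dot d (vsub (y 1%nat) (y 0%nat)) (vsub (y (S m)) (y m))) in *.
      set (Q := dot d (vsub (y (S m)) (y m)) (vsub (y (S (S m))) (y (S m)))) in *.
      pose proof (Hcosb m Hm) as HQ. fold Q in HQ.
      assert (HcX: 0 <= cos X) by (apply cos_ge_0; lra).
      assert (HsX: 0 <= sin X) by (apply sin_ge_0; lra).
      assert (Hcb: 0 <= cos beta) by (apply cos_ge_0; lra).
      assert (Hsb: 0 <= sin beta) by (apply sin_ge_0; lra).
      pose proof (sin2_cos2 X) as E1. pose proof (sin2_cos2 beta) as E2. unfold Rsqr in E1, E2.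
      assert (0 < h^2) by nra.
      assert (S1: sqrt (h ^ 2 * h ^ 2 - P ^ 2) <= h^2 * sin X).
      { apply Hsq. nra.
        assert (h^2 * cos X <= P) by lra.
        assert (0 <= h^2 * cos X) by nra.
        assert ((h^2 * cos X)^2 <= P^2) by (apply pow_incr; lra).
        replace ((h ^ 2 * sin X) ^ 2) with (h^2*h^2*(sin X * sin X)) by ring.
        replace (sin X * sin X) with (1 - cos X * cos X) by lra.
        lra. }
      assert (S2: sqrt (h ^ 2 * h ^ 2 - Q ^ 2) <= h^2 * sin beta).
      { apply Hsq. nra.
        assert (0 <= h^2 * cos beta) by nra.
        assert ((h^2 * cos beta)^2 <= Q^2) by (apply pow_incr; lra).
        replace ((h ^ 2 * sin beta) ^ 2) with (h^2*h^2*(sin beta * sin beta)) by ring.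
        replace (sin beta * sin beta) with (1 - cos beta * cos beta) by lra.
        lra. }
      pose proof (sqrt_pos (h ^ 2 * h ^ 2 - P ^ 2)). pose proof (sqrt_pos (h ^ 2 * h ^ 2 - Q ^ 2)).
      assert (PQ: (h^2 * cos X) * (h^2 * cos beta) <= P * Q).
      { apply Rmult_le_compat; nra. }
      assert (SS: sqrt (h ^ 2 * h ^ 2 - P ^ 2) * sqrt (h ^ 2 * h ^ 2 - Q ^ 2)
                  <= (h^2 * sin X) * (h^2 * sin beta)).
      { apply Rmult_le_compat; nra. }
      rewrite S_INR. replace ((INR m + 1) * beta) with (X + beta) by (unfold X; ring).
      rewrite cos_plus.
      apply Rmult_le_reg_l with (h^2); [lra|].
      nra. }
  assert (C2: forall m, (m < n)%nat ->
     - (r * h * sin (INR m * beta)) <= dot d (vsub (y (S m)) (y m)) w).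
  { intros m Hm.
    pose proof (C1 m Hm) as H1.
    set (X := INR m * beta) in *.
    assert (HX0: 0 <= X) by (unfold X; apply Rmult_le_pos; [apply pos_INR|lra]).
    assert (HXb: X <= PI / 2).
    { assert (INR m <= INR n) by (apply le_INR; lia). unfold X. nra. }
    assert (HcX: 0 <= cos X) by (apply cos_ge_0; lra).
    assert (HsX: 0 <= sin X) by (apply sin_ge_0; lra).
    pose proof (sin2_cos2 X) as E1. unfold Rsqr in E1.
    pose proof (bessel2 d (vsub (y (S m)) (y m)) (vsub (y 1%nat) (y 0%nat)) w Horth) as B.
    rewrite (He 0%nat ltac:(lia)), Hw, (He m Hm) in B.
    specialize (B ltac:(nra) ltac:(nra)).
    rewrite (dot_sym d _ (vsub (y 1%nat) (y 0%nat))) in B.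
    set (P := dot d (vsub (y 1%nat) (y 0%nat)) (vsub (y (S m)) (y m))) in *.
    set (T := dot d (vsub (y (S m)) (y m)) w) in *.
    assert (0 <= h^2 * cos X) by nra.
    assert ((h^2 * cos X)^2 <= P^2) by (apply pow_incr; lra).
    assert (h^2 * (T^2) <= h^2 * ((r * h * sin X)^2)).
    { replace ((r * h * sin X)^2) with (r^2*h^2*(sin X * sin X)) by ring.
      replace (sin X * sin X) with (1 - cos X * cos X) by lra.
      nra. }
    assert (T^2 <= (r*h*sin X)^2) by (apply Rmult_le_reg_l with (h^2); nra).
    assert (0 <= r * h * sin X) by (apply Rmult_le_pos; [apply Rmult_le_pos|]; lra).
    nra. }
  assert (C3: forall m, (m <= n)%nat ->
     h * asum h beta m <= dot d (vsub (y m) (y 0%nat)) (vsub (y 1%nat) (y 0%nat)) /\ - (r * bsum h beta m) <= dot d (vsub (y m) (y 0%nat)) w).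
  { induction m as [|m IH]; intros Hm.
    - simpl. rewrite !dot_zero by (intros i; unfold vsub; ring). lra.
    - specialize (IH ltac:(lia)).
      assert (Ez: forall z, dot d (vsub (y (S m)) (y 0%nat)) z =
                 dot d (vsub (y m) (y 0%nat)) z + dot d (vsub (y (S m)) (y m)) z).
      { intros z. rewrite <- dot_addl. apply dot_ext; intros i; unfold vsub; ring. }
      rewrite !Ez. cbn [asum bsum].
      pose proof (C1 m ltac:(lia)). pose proof (C2 m ltac:(lia)).
      rewrite (dot_sym d (vsub (y (S m)) (y m))).
      destruct IH. split; nra. }
  destruct (C3 k ltac:(lia)) as [F1 F2].
  set (x := beta / 2).
  assert (Hx: 0 < x) by (unfold x; lra).
  assert (Ehx: h = 2 * r * x) by (transitivity ((r*K)*h); [rewrite HrK; ring| unfold x, beta; field]).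
  assert (Ebx: beta = 2 * x) by (unfold x; field).
  assert (HkA: INR k * x <= PI / 4).
  { assert (INR k <= INR n) by (apply le_INR; lia). unfold x. nra. }
  pose proof (trig_final r x k Hr Hx ltac:(lia) HkA) as [T1 [T2 T3]].
  rewrite <- Ehx, <- Ebx in T1, T2, T3.
  set (a := asum h beta k) in *. set (b := bsum h beta k) in *.
  pose proof (bessel2 d (vsub (y k) (y 0%nat)) (vsub (y 1%nat) (y 0%nat)) w Horth) as B.
  rewrite (He 0%nat ltac:(lia)), Hw in B.
  specialize (B ltac:(nra) ltac:(nra)).
  assert (EQ: dot d (vsub (y k) c) (vsub (y k) c) =
     dot d (vsub (y k) (y 0%nat)) (vsub (y k) (y 0%nat)) + 2 * dot d (vsub (y k) (y 0%nat)) w + dot d w w).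
  { rewrite <- dot_add_sq. apply dot_ext; intros i; unfold w, vsub; ring. }
  set (S := dot d (vsub (y k) (y 0%nat)) (vsub (y 1%nat) (y 0%nat))) in *.
  set (T := dot d (vsub (y k) (y 0%nat)) w) in *.
  set (Q := dot d (vsub (y k) (y 0%nat)) (vsub (y k) (y 0%nat))) in *.
  assert (HS: (h * a)^2 <= S^2) by (apply pow_incr; nra).
  assert (HQ: a^2 * r^2 + T^2 <= Q * r^2).
  { apply Rmult_le_reg_l with (h^2); [nra|]. nra. }
  assert (HT: 0 <= T + r^2) by nra.
  assert (HT2: (r * (r - b))^2 <= (T + r^2)^2) by (apply pow_incr; nra).
  assert (r^2*(2*r*b) < r^2*(a^2+b^2)) by (apply Rmult_lt_compat_l; nra).
  assert (Hpos: r^2 * r^2 < (Q + 2 * T + r^2) * r^2) by lra.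
  assert (Hgt: r^2 < Q + 2 * T + r^2) by (apply Rmult_lt_reg_r with (r^2); nra).
  rewrite Hw in EQ.
  unfold vnorm. rewrite EQ.
  assert (Er: sqrt (r^2) = r) by (apply sqrt_pow2; lra).
  apply Rlt_gt. apply Rle_lt_trans with (sqrt (r^2)); [lra|].
  apply sqrt_lt_1_alt. split; [nra| lra].
Qed.
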